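(* Consider the wireless network described in the context, with nodes sending independent codewords under decode-and-forward (DF). Suppose the nearest neighbor algorithm (NNA) terminates normally, producing a route $\mathcal{M}^{\mathrm{NNA}}$ from the source (node $1$) to the destination (node $D$). Then $\mathcal{M}^{\mathrm{NNA}}$ is optimal for DF: $$R_{\mathrm{DF}}(\mathcal{M}^{\mathrm{NNA}}) = R_{\mathrm{DF}}^{\max} = \max_{\mathcal{M}} R_{\mathrm{DF}}(\mathcal{M}),$$ where the maximum is over all routes $\mathcal{M}$ from node $1$ to node $D$.
   Context: Network: a finite set of nodes $\mathcal{S}=\{1,2,\dots,D\}$, $D\ge 2$. Node $1$ is the source and node $D$ is the destination. Received powers: for distinct nodes $i,t$, the power received at $t$ from $i$ is a positive real number $P_{it}$. In the paper $P_{it}=\kappa d_{it}^{-\eta}P_i$, where $P_i>0$ is the transmit power, $d_{it}$ the distance, $\eta\ge 2$ and $\kappa>0$. All receivers have the same noise power $N>0$. Routes: a route is an ordered tuple of distinct nodes $\mathcal{M}=(m_1,\dots,m_L)$ with $m_1=1$ and $L\ge1$. It is a route from the source to the destination if moreover $m_L=D$. For a route $\mathcal{M}$ and a node $a\notin\mathcal{M}$, $\mathcal{M}\cup\{a\}$ denotes the route $(m_1,\dots,m_L,a)$; appending an ordered tuple of nodes is defined the same way. DF with independent codewords: the reception rate of node $m_t$ ($2\le t\le L$) in route $\mathcal{M}$ is $$R_{m_t}(\mathcal{M})=\tfrac12\log\Big(1+N^{-1}\sum_{i=1}^{t-1}P_{m_i m_t}\Big).$$ The DF rate supported by $\mathcal{M}$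 (for $L\ge2$) is $R_{\mathrm{DF}}(\mathcal{M})=\min_{2\le t\le L}R_{m_t}(\mathcal{M})$. Also $R_{\mathrm{DF}}^{\max}=\max R_{\mathrm{DF}}(\mathcal{M})$ over all routes from $1$ to $D$. A route from $1$ to $D$ is optimal for DF if it attains $R_{\mathrm{DF}}^{\max}$. Nearest neighbor: node $i\notin\mathcal{M}$ is a nearest neighbor with respect to route $\mathcal{M}$ iff $P_{mi}\ge P_{mj}$ for all $m\in\mathcal{M}$ and all $j\in\mathcal{S}\setminus(\mathcal{M}\cup\{i\})$. NNA: 1. Start with $\mathcal{M}=(1)$. 2. If there is a unique nearest neighbor $i^*$ with respect to the current $\mathcal{M}$, set $\mathcal{M}\leftarrow\mathcal{M}\cup\{i^*\}$; otherwise the algorithm terminates prematurely. 3. Repeat step 2 until node $D$ has been appended, in which case the algorithm terminates normally and outputs $\mathcal{M}$. *)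

(* Defs.v *)
From Stdlib Require Import Reals List.
Import ListNotations.
Open Scope R_scope.

(* Nodes are the natural numbers 1..D; node 1 is the source, node D the destination. *)
Definition node_in (D : nat) (i : nat) : Prop := (1 <= i <= D)%nat.

Definition is_route (D : nat) (M : list nat) : Prop :=
  NoDup M /\ (forall m, In m M -> node_in D m) /\ head M = Some 1%nat.

Definition is_route_1D (D : nat) (M : list nat) : Prop :=
  is_route D M /\ last M 0%nat = D.

Definition recv_rate (P : nat -> nat -> R) (N : R) (prefix : list nat) (x : nat) : R :=
  / 2 * ln (1 + / N * fold_right Rplus 0 (map (fun m => P m x) prefix)).

(* The list [R_{m_2}(M); ...; R_{m_L}(M)], computed with the already visited prefix. *)
Fixpoint rates_aux (P : nat -> nat -> R) (N : R) (prefix rest : list nat) : list R :=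
  match rest with
  | [] => []
  | x :: rest' => recv_rate P N prefix x :: rates_aux P N (prefix ++ [x]) rest'
  end.

Definition rates (P : nat -> nat -> R) (N : R) (M : list nat) : list R :=
  match M with
  | [] => []
  | m1 :: rest => rates_aux P N [m1] rest
  end.

(* R_DF(M) = min_{2 <= t <= L} R_{m_t}(M)  (meaningful for L >= 2). *)
Definition R_DF (P : nat -> nat -> R) (N : R) (M : list nat) : R :=
  match rates P N M with
  | [] => 0
  | r :: rs => fold_left Rmin rs r
  end.

Definition nearest_neighbor (D : nat) (P : nat -> nat -> R) (M : list nat) (i : nat) : Prop :=
  node_in D i /\ ~ In i M /\
  forall m j, In m M -> node_in D j -> ~ In j M -> j <> i -> P m j <= P m i.

Definition unique_nearest_neighbor (D : nat) (P : nat -> nat -> R) (M : list nat) (i : nat) : Prop :=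
  nearest_neighbor D P M i /\ forall j, nearest_neighbor D P M j -> j = i.

Inductive nna_reach (D : nat) (P : nat -> nat -> R) : list nat -> Prop :=
  | nna_start : nna_reach D P [1%nat]
  | nna_step : forall M i,
      nna_reach D P M -> ~ In D M -> unique_nearest_neighbor D P M i ->
      nna_reach D P (M ++ [i]).

Definition nna_output (D : nat) (P : nat -> nat -> R) (M : list nat) : Prop :=
  nna_reach D P M /\ In D M.

(* Main.v *)
Require Import Defs.
From Stdlib Require Import Reals List Lra Lia.
Import ListNotations.
Open Scope R_scope.

Lemma ln_le' x y : 0 < x -> x <= y -> ln x <= ln y.
Proof.
  intros Hx Hxy. destruct (Rle_lt_or_eq_dec _ _ Hxy) as [H|H].
  - left. apply ln_increasing; auto.
  - subst; lra.
Qed.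

Definition sumR (l : list R) := fold_right Rplus 0 l.

Lemma sumR_app l1 l2 : sumR (l1 ++ l2) = sumR l1 + sumR l2.
Proof. induction l1; simpl; unfold sumR in *; simpl; try rewrite IHl1; lra. Qed.

Lemma sum_le_pointwise (f g : nat -> R) q :
  (forall m, In m q -> f m <= g m) -> sumR (map f q) <= sumR (map g q).
Proof.
  induction q; simpl; intros H; unfold sumR in *; simpl. lra.
  pose proof (H a (or_introl eq_refl)).
  assert (fold_right Rplus 0 (map f q) <= fold_right Rplus 0 (map g q)) by
    (apply IHq; auto). lra.
Qed.

Lemma sum_nonneg (f : nat -> R) q :
  (forall m, In m q -> 0 <= f m) -> 0 <= sumR (map f q).
Proof.
  induction q; simpl; intros H; unfold sumR in *; simpl. lra.
  pose proof (H a (or_introl eq_refl)).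
  assert (0 <= fold_right Rplus 0 (map f q)) by (apply IHq; auto). lra.
Qed.

Lemma sum_sub (f : nat -> R) q : forall pre,
  NoDup q -> NoDup pre -> incl q pre -> (forall m, In m pre -> 0 <= f m) ->
  sumR (map f q) <= sumR (map f pre).
Proof.
  induction q as [|a q IH]; intros pre Hq Hp Hi Hf.
  - simpl. apply sum_nonneg; auto.
  - assert (Ha : In a pre) by (apply Hi; left; auto).
    destruct (in_split _ _ Ha) as [p1 [p2 E]]. subst pre.
    inversion Hq; subst.
    assert (IHa : sumR (map f q) <= sumR (map f (p1 ++ p2))).
    { apply IH; auto. eapply NoDup_remove_1; eauto.
      intros z Hz. assert (In z (p1 ++ a :: p2)) by (apply Hi; right; auto).
      apply in_app_or in H. apply in_or_app. destruct H as [H|[H|H]]; auto.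
      subst; contradiction. intros; apply Hf; auto. apply in_app_or in H.
      apply in_or_app. destruct H; simpl; auto. }
    simpl. rewrite map_app in *. rewrite sumR_app in *. simpl.
    unfold sumR in *; simpl. lra.
Qed.

Lemma fold_min_le : forall rs a, fold_left Rmin rs a <= a /\ forall x, In x rs -> fold_left Rmin rs a <= x.
Proof.
  induction rs; simpl; intros b. split; [lra| tauto].
  destruct (IHrs (Rmin b a)) as [H1 H2]. split.
  - pose proof (Rmin_l b a). lra.
  - intros x [<-|Hx]; auto. pose proof (Rmin_r b a). lra.
Qed.

Lemma fold_min_in : forall rs a, In (fold_left Rmin rs a) (a :: rs).
Proof.
  induction rs; simpl; intros b. auto.
  destruct (IHrs (Rmin b a)) as [H|H].
  - rewrite <- H. destruct (Rle_dec b a) as [E|E]; [rewrite (Rmin_left _ _ E)|rewrite (Rmin_right b a) by lra]; simpl; auto.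
  - auto.
Qed.

Lemma rates_aux_in P N : forall l1 prefix x l2,
  In (recv_rate P N (prefix ++ l1) x) (rates_aux P N prefix (l1 ++ x :: l2)).
Proof.
  induction l1; intros prefix x l2; simpl.
  - rewrite app_nil_r. auto.
  - right. specialize (IHl1 (prefix ++ [a]) x l2). rewrite <- app_assoc in IHl1. exact IHl1.
Qed.

Lemma rates_aux_inv P N : forall rest prefix r, In r (rates_aux P N prefix rest) ->
  exists l1 x l2, rest = l1 ++ x :: l2 /\ r = recv_rate P N (prefix ++ l1) x.
Proof.
  induction rest; simpl; intros prefix r H. contradiction.
  destruct H as [<-|H].
  - exists [], a, rest. rewrite app_nil_r. auto.
  - destruct (IHrest _ _ H) as [l1 [x [l2 [E1 E2]]]].
    exists (a :: l1), x, l2. subst. rewrite <- app_assoc. auto.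
Qed.

Lemma RDF_le P N m1 l1 x l2 :
  R_DF P N (m1 :: l1 ++ x :: l2) <= recv_rate P N (m1 :: l1) x.
Proof.
  unfold R_DF, rates. pose proof (rates_aux_in P N l1 [m1] x l2) as H.
  simpl in H. revert H. destruct (rates_aux P N [m1] (l1 ++ x :: l2)) as [|r l].
  simpl; tauto.
  intros [<-|H]. apply (proj1 (fold_min_le _ _)). apply (proj2 (fold_min_le _ _)); auto.
Qed.

Lemma nna_route D P M : (2 <= D)%nat -> nna_reach D P M -> is_route D M.
Proof.
  intros HD H. induction H.
  - split. repeat constructor; simpl; auto. split; simpl; auto.
    intros m [<-|[]]. unfold node_in; lia.
  - destruct IHnna_reach as [Hn [Hi Hh]]. destruct H1 as [[Hni [Hnot _]] _].
    split; [|split].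
    + apply NoDup_app; auto. constructor; auto; constructor.
      intros a Ha [<-|[]]; contradiction.
    + intros m Hm. apply in_app_or in Hm. destruct Hm as [Hm|[<-|[]]]; auto.
    + destruct M; simpl in *; auto. discriminate.
Qed.

Lemma nna_last D P M : nna_reach D P M -> In D M -> last M 0%nat = D.
Proof.
  intros H. destruct H; simpl. intros [<-|[]]; auto.
  intros Hin. apply in_app_or in Hin. destruct Hin as [Hin|[<-|[]]]; [contradiction|].
  apply last_last.
Qed.

Lemma nna_prefix D P M : nna_reach D P M -> forall pre x post,
  M = pre ++ x :: post -> pre <> [] -> nearest_neighbor D P pre x /\ ~ In D pre.
Proof.
  intros H. induction H; intros pre x post E Hne.
  - destruct pre as [|a [|b pre]]; simpl in E; try congruence; inversion E.
  - destruct post as [|p0 post0].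
    + apply app_inj_tail in E. destruct E; subst. split; auto. apply H1.
    + assert (Hne0 : p0 :: post0 <> []) by discriminate.
      destruct (exists_last Hne0) as [post' [y Hy]]. rewrite Hy in E.
      rewrite app_comm_cons, app_assoc in E. apply app_inj_tail in E.
      destruct E as [E _]. eapply IHnna_reach; eauto.
Qed.

Lemma last_in (l : list nat) d : l <> [] -> In (last l d) l.
Proof.
  intros H. destruct (exists_last H) as [l' [y ->]]. rewrite last_last.
  apply in_or_app; right; left; auto.
Qed.

Lemma first_out (pre M : list nat) : (exists z, In z M /\ ~ In z pre) ->
  exists q y r, M = q ++ y :: r /\ incl q pre /\ ~ In y pre.
Proof.
  induction M as [|a M IH]; intros [z [Hz Hn]]. contradiction.
  destruct (in_dec Nat.eq_dec a pre) as [Ha|Ha].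
  - destruct Hz as [<-|Hz]. contradiction.
    destruct IH as [q [y [r [E [I1 I2]]]]]. eauto.
    exists (a :: q), y, r. subst. split; auto. split; auto.
    intros w [<-|Hw]; auto.
  - exists [], a, M. split; auto. split; auto. intros w [].
Qed.

Theorem theorem1 (D : nat) (P : nat -> nat -> R) (N : R) (M_NNA : list nat) :
  (2 <= D)%nat ->
  (forall i t, node_in D i -> node_in D t -> i <> t -> 0 < P i t) ->
  0 < N ->
  nna_output D P M_NNA ->
  is_route_1D D M_NNA /\
  (forall M, is_route_1D D M -> R_DF P N M <= R_DF P N M_NNA).
Proof.
  intros HD HP HN [Hr HinD].
  assert (HA : is_route_1D D M_NNA) by (split; [apply (nna_route D P); auto | apply (nna_last D P); auto]).
  split; auto.
  intros M [[MN [Mi Mh]] Ml].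
  destruct HA as [[AN [Ai Ah]] Al].
  destruct M_NNA as [|a1 arest]; [discriminate|]. simpl in Ah. injection Ah as ->.
  unfold R_DF at 2, rates.
  destruct (rates_aux P N [1%nat] arest) as [|r0 rs] eqn:Er.
  { destruct arest. simpl in Al. lia. simpl in Er. discriminate. }
  assert (Hin : In r0 (rates_aux P N [1%nat] arest)) by (rewrite Er; left; auto).
  assert (Hin' : In (fold_left Rmin rs r0) (rates_aux P N [1%nat] arest)) by
    (rewrite Er; apply fold_min_in).
  destruct (rates_aux_inv P N _ _ _ Hin') as [l1 [x [l2 [E1 E2]]]].
  rewrite E2. clear E2 Hin Hin' Er r0 rs.
  simpl app. subst arest.
  set (pre := (1%nat :: l1)).
  destruct (nna_prefix D P _ Hr pre x l2 eq_refl ltac:(discriminate)) as [NN HDpre].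
  assert (Hpre : forall m, In m pre -> node_in D m) by (intros m Hm; apply Ai; destruct Hm as [<-|Hm]; [left|right; apply in_or_app; left]; auto).
  assert (Hx : node_in D x) by (apply Ai; right; apply in_or_app; right; left; auto).
  assert (Hxpre : ~ In x pre).
  { change (1%nat :: l1 ++ x :: l2) with (pre ++ x :: l2) in AN.
    apply NoDup_remove_2 in AN. intro; apply AN; apply in_or_app; auto. }
  assert (HpreND : NoDup pre).
  { change (1%nat :: l1 ++ x :: l2) with (pre ++ x :: l2) in AN.
    eapply NoDup_app_remove_r; eauto. }
  (* find first node of M out of pre *)
  assert (HDM : In D M).
  { destruct M. discriminate. rewrite <- Ml. apply last_in. discriminate. }
  destruct (first_out pre M (ex_intro _ D (conj HDM HDpre))) as [q [y [r [EM [Iq Iy]]]]].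
  destruct q as [|m1 q'].
  { exfalso. simpl in EM. subst M. simpl in Mh. injection Mh as ->. apply Iy. left; auto. }
  subst M. simpl in Mh. injection Mh as ->.
  eapply Rle_trans. apply RDF_le.
  unfold recv_rate.
  apply Rmult_le_compat_l. lra.
  assert (Hy : node_in D y) by (apply Mi; apply in_or_app; right; left; auto).
  assert (HqND : NoDup (1%nat :: q')).
  { apply (NoDup_app_remove_r _ (y :: r)). exact MN. }
  assert (S1 : 0 <= sumR (map (fun m => P m y) (1%nat :: q'))).
  { apply sum_nonneg. intros m Hm. left. apply HP; auto.
    intro; subst. apply Iy. apply Iq; auto. }
  assert (S2 : sumR (map (fun m => P m y) (1%nat :: q')) <= sumR (map (fun m => P m x) (1%nat :: q'))).
  { apply sum_le_pointwise. intros m Hm.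
    destruct (Nat.eq_dec y x) as [->|Hne]. lra.
    destruct NN as [_ [_ NN]]. apply NN; auto. }
  assert (S3 : sumR (map (fun m => P m x) (1%nat :: q')) <= sumR (map (fun m => P m x) pre)).
  { apply sum_sub; auto. intros m Hm. left. apply HP; auto.
    intro; subst; contradiction. }
  unfold sumR in *.
  apply ln_le'.
  - assert (0 <= / N * fold_right Rplus 0 (map (fun m : nat => P m y) (1%nat :: q'))).
    { apply Rmult_le_pos; auto. left; apply Rinv_0_lt_compat; auto. }
    lra.
  - apply Rplus_le_compat_l. apply Rmult_le_compat_l. left; apply Rinv_0_lt_compat; auto.
    lra.
Qed.
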